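(* Let $A=(a_{ij})\in F$. Then $a_{22}=a_{11}'$ and $a_{21}=a_{12}'$, where $'$ denotes the automorphism of $K[X;Y]$ defined below.
   Context: $K$ is an infinite field of characteristic different from 2. Let $X=\{x_1,x_2,x_1',x_2'\}$ and $Y=\{y_1,y_2,y_1',y_2'\}$, and let $K[X;Y]\cong K[X]\otimes_K E(Y)$ be the free supercommutative algebra: the $x$'s are even commuting variables, the $y$'s are odd pairwise anticommuting variables, and $E(Y)$ is the Grassmann algebra on the vector space with basis $Y$. Put $C_1=\begin{pmatrix} x_1&y_1\\ y_1'&x_1'\end{pmatrix}$, $C_2=\begin{pmatrix} x_2&y_2\\ y_2'&x_2'\end{pmatrix}$, and let $F=K[C_1,C_2]$ be the unital $K$-subalgebra of $M_2(K[X;Y])$ generated by $C_1,C_2$. The map $'$ is the algebra automorphism of $K[X;Y]$ (of order two) given by $x_i\mapsto x_i'$, $x_i'\mapsto x_i$, $y_i\mapsto y_i'$, $y_i'\mapsto y_i$ for $i=1,2$. *)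

(* Defs.v *)
From HB Require Import structures.
From mathcomp Require Import all_boot all_order all_algebra.
From mathcomp Require Import mpoly.
Set Implicit Arguments. Unset Strict Implicit. Unset Printing Implicit Defensive.
Import Order.TTheory GRing.Theory.
Local Open Scope ring_scope.

(* Indexing conventions (both for even and odd variables):
   0 ~ x_1 / y_1,  1 ~ x_2 / y_2,  2 ~ x_1' / y_1',  3 ~ x_2' / y_2'.        *)

Section Super.
Variable K : fieldType.

(* The free supercommutative algebra K[X;Y] = K[X] (x) E(Y):
   an element is a family (p_S)_S indexed by subsets S of the odd variables,
   standing for  \sum_S p_S * y_S  where  y_S = y_{s_1} ... y_{s_k}
   with s_1 < ... < s_k, and p_S in the polynomial ring K[X] = {mpoly K[4]}. *)
Definition SA := {ffun {set 'I_4} -> {mpoly K[4]}}.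

(* sign of y_S * y_T = sgnST * y_(S :|: T) for disjoint S, T: the number of
   inversions (i in S, j in T, j < i). *)
Definition ninv (S T : {set 'I_4}) : nat :=
  #|[set p : 'I_4 * 'I_4 | (p.1 \in S) && (p.2 \in T) && (p.2 < p.1)%N]|.

Definition sa_mul (f g : SA) : SA :=
  [ffun U => \sum_(S : {set 'I_4}) \sum_(T : {set 'I_4} |
       [disjoint S & T] && (S :|: T == U))
       ((-1) ^+ ninv S T) * (f S * g T)].

Definition sa_poly (p : {mpoly K[4]}) : SA :=
  [ffun U => if U == set0 then p else 0].
Definition sa_x (i : 'I_4) : SA := sa_poly 'X_i.
Definition sa_y (i : 'I_4) : SA := [ffun U => if U == [set i] then 1 else 0].
Definition sa_scal (c : K) : SA := sa_poly c%:MP.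

Definition sw (i : 'I_4) : 'I_4 := inord ((i + 2) %% 4).

(* inversions created by applying sw to the increasing word y_S *)
Definition swinv (S : {set 'I_4}) : nat :=
  #|[set p : 'I_4 * 'I_4 | (p.1 \in S) && (p.2 \in S) && (p.1 < p.2)%N
                            && (sw p.2 < sw p.1)%N]|.

Definition poly_prime (p : {mpoly K[4]}) : {mpoly K[4]} :=
  comp_mpoly [tuple 'X_(sw i) | i < 4] p.

(* the algebra automorphism ' : x_i <-> x_i', y_i <-> y_i':
   (\sum_S p_S y_S)' = \sum_S p_S' (y_{sw s_1} ... y_{sw s_k})
                     = \sum_S p_S' (-1)^(swinv S) y_(sw @: S). *)
Definition sa_prime (f : SA) : SA :=
  [ffun U => \sum_(S : {set 'I_4} | sw @: S == U)
                 ((-1) ^+ swinv S) * poly_prime (f S)].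

Definition mx2 := 'M[SA]_2.

Definition mx2_mul (A B : mx2) : mx2 :=
  \matrix_(i, j) \sum_(k < 2) sa_mul (A i k) (B k j).

Definition mx2_of (a b c d : SA) : mx2 :=
  \matrix_(i < 2, j < 2)
    if i == 0 then (if j == 0 then a else b) else (if j == 0 then c else d).

Definition C1 : mx2 := mx2_of (sa_x 0) (sa_y 0) (sa_y 2) (sa_x 2).
Definition C2 : mx2 := mx2_of (sa_x 1) (sa_y 1) (sa_y 3) (sa_x 3).

(* F = K[C1, C2]: the unital K-subalgebra of M_2(K[X;Y]) generated by C1, C2,
   i.e. the smallest set containing the scalar matrices c*I (c in K), C1, C2,
   closed under sum and product (K-scaling is product with c*I). *)
Inductive inF : mx2 -> Prop :=
| inF_scal (c : K) : inF (mx2_of (sa_scal c) 0 0 (sa_scal c))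
| inF_C1 : inF C1
| inF_C2 : inF C2
| inF_add A B : inF A -> inF B -> inF (A + B)
| inF_mul A B : inF A -> inF B -> inF (mx2_mul A B).

End Super.

(* Main.v *)
Require Import Defs.
From HB Require Import structures.
From mathcomp Require Import all_boot all_order all_algebra.
From mathcomp Require Import mpoly ring.
Set Implicit Arguments. Unset Strict Implicit.
Import GRing.Theory.
Local Open Scope ring_scope.

Definition pb (b0 b1 b2 b3 : bool) (i : 'I_4) : bool := nth false [:: b0; b1; b2; b3] i.
Definition o4 : seq 'I_4 := [:: @Ordinal 4 0 isT; @Ordinal 4 1 isT; @Ordinal 4 2 isT; @Ordinal 4 3 isT].
Definition pairs : seq ('I_4 * 'I_4)%type := [seq (i, j) | i <- o4, j <- o4].
Definition swc (i : 'I_4) : 'I_4 := @Ordinal 4 ((i + 2) %% 4) (@ltn_pmod (i + 2) 4 isT).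
Lemma swE i : sw i = swc i.
Proof. by apply/val_inj; rewrite /sw /= inordK // ltn_pmod. Qed.
Definition ninvb (s t : pred 'I_4) := count (fun p : 'I_4 * 'I_4 => s p.1 && t p.2 && (p.2 < p.1)%N) pairs.
Definition swinvb (s : pred 'I_4) := count (fun p : 'I_4 * 'I_4 => s p.1 && s p.2 && (p.1 < p.2)%N && (swc p.2 < swc p.1)%N) pairs.

Lemma card_pairs (P : pred ('I_4 * 'I_4)%type) : #|[set p | P p]| = count P pairs.
Proof.
rewrite cardE /enum_mem size_filter.
have : perm_eq (Finite.enum ('I_4 * 'I_4)%type) pairs.
  apply: uniq_perm; first by rewrite -enumT enum_uniq.
    by vm_compute.
  case=> i j; rewrite -enumT mem_enum inE.
  by case: i => -[|[|[|[|//]]]] ?; case: j => -[|[|[|[|//]]]] ?; vm_compute.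
move/permP => <-; apply: eq_count => p.
by change ((p \in [set p | P p]) = P p); rewrite inE.
Qed.

Lemma brute : forall b0 b1 b2 b3 c0 c1 c2 c3 : bool,
  let s := pb b0 b1 b2 b3 in let t := pb c0 c1 c2 c3 in
  all (fun i => ~~ (s i && t i)) o4 ==>
  (odd (swinvb (fun i => s i || t i) + ninvb s t) ==
   odd (ninvb (fun i => s (swc i)) (fun i => t (swc i)) + (swinvb s + swinvb t))).
Proof. by do 8!case; vm_compute; reflexivity. Qed.

Lemma sw_inv i : sw (sw i) = i.
Proof.
rewrite !swE; apply/val_inj => /=.
by case: i => -[|[|[|[|//]]]].
Qed.

Lemma mem_sw (S : {set 'I_4}) i : (i \in sw @: S) = (sw i \in S).
Proof.
apply/imsetP/idP => [[j jS ->]|H]; first by rewrite sw_inv.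
by exists (sw i); rewrite ?sw_inv.
Qed.

Lemma isw_inv (S : {set 'I_4}) : sw @: (sw @: S) = S.
Proof. by apply/setP=> i; rewrite !mem_sw sw_inv. Qed.

Lemma isw_inj : injective (fun S : {set 'I_4} => sw @: S).
Proof. by move=> S T e; rewrite -(isw_inv S) e isw_inv. Qed.

Lemma sw_inj : injective sw.
Proof. by move=> i j e; rewrite -(sw_inv i) e sw_inv. Qed.

Lemma memS (S : {set 'I_4}) :
  mem S =1 pb (inord 0 \in S) (inord 1 \in S) (inord 2 \in S) (inord 3 \in S).
Proof.
move=> i /=; case: i => -[|[|[|[|//]]]] Hi /=; congr (_ \in S); apply/val_inj; by rewrite /= inordK.
Qed.

Lemma parity (S T : {set 'I_4}) : [disjoint S & T] ->
  odd (swinv (S :|: T) + ninv S T) =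
  odd (ninv (sw @: S) (sw @: T) + (swinv S + swinv T)).
Proof.
move=> dST.
have H := brute (inord 0 \in S) (inord 1 \in S) (inord 2 \in S) (inord 3 \in S)
  (inord 0 \in T) (inord 1 \in T) (inord 2 \in T) (inord 3 \in T).
cbv zeta in H.
set s := pb (inord 0 \in S) (inord 1 \in S) (inord 2 \in S) (inord 3 \in S) in H.
set t := pb (inord 0 \in T) (inord 1 \in T) (inord 2 \in T) (inord 3 \in T) in H.
have hS : forall i, (i \in S) = s i := memS S.
have hT : forall i, (i \in T) = t i := memS T.
move: H.
have -> : all (fun i => ~~ (s i && t i)) o4.
  apply/allP => i _; rewrite -hS -hT /=.
  by apply/negP => /andP [iS iT]; rewrite (disjointFr dST iS) in iT.
move=> /= /eqP HH.
have e1 : swinv (S :|: T) = swinvb (fun i => s i || t i).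
  rewrite /ninv /swinv card_pairs; apply: eq_count => p; by rewrite /= ?inE !hS !hT ?swE.
have e2 : ninv S T = ninvb s t.
  rewrite /ninv /swinv card_pairs; apply: eq_count => p; by rewrite /= ?inE !hS !hT ?swE.
have e3 : ninv (sw @: S) (sw @: T) = ninvb (fun i => s (swc i)) (fun i => t (swc i)).
  rewrite /ninv card_pairs; apply: eq_count => p; by rewrite /= ?inE !mem_sw !hS !hT !swE.
have e4 : forall (X : {set 'I_4}) (x : pred 'I_4), (forall i, (i \in X) = x i) -> swinv X = swinvb x.
  by move=> X x hx; rewrite /swinv card_pairs; apply: eq_count => p; rewrite /= ?inE !hx !swE.
by rewrite e1 e2 e3 (e4 _ _ hS) (e4 _ _ hT).
Qed.

Section Alg.
Variable K : fieldType.
Local Notation SA := (SA K).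

Definition eps (S : {set 'I_4}) : {mpoly K[4]} := (-1) ^+ swinv S.

Lemma sa_primeE (f : SA) U :
  sa_prime f U = eps (sw @: U) * poly_prime (f (sw @: U)).
Proof.
rewrite ffunE (big_pred1 (sw @: U)) // => S /=.
apply/eqP/eqP => [<-|->]; by rewrite isw_inv.
Qed.

Lemma sign_sets (S T : {set 'I_4}) : [disjoint S & T] ->
  eps (S :|: T) * (-1) ^+ ninv S T =
  (-1) ^+ ninv (sw @: S) (sw @: T) * (eps S * eps T) :> {mpoly K[4]}.
Proof.
move=> dST; rewrite /eps -!exprD -signr_odd -(parity dST) signr_odd.
by [].
Qed.

Lemma pp_sign n : poly_prime ((-1) ^+ n : {mpoly K[4]}) = (-1) ^+ n.
Proof. by rewrite /poly_prime rmorphXn rmorphN1. Qed.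

Lemma prime_mul (f g : SA) :
  sa_prime (sa_mul f g) = sa_mul (sa_prime f) (sa_prime g).
Proof.
apply/ffunP => U; rewrite sa_primeE !ffunE.
rewrite /poly_prime rmorph_sum mulr_sumr.
rewrite [RHS](reindex_inj isw_inj) /=.
apply: eq_bigr => S _.
rewrite rmorph_sum mulr_sumr [RHS](reindex_inj isw_inj) /=.
apply: eq_big => T.
  rewrite -!setI_eq0 -imsetI; last by move=> x y _ _; apply: sw_inj.
  rewrite imset_eq0 -imsetU; congr andb.
  by apply/eqP/eqP => [->|<-]; rewrite isw_inv.
move=> /andP [dST /eqP eU].
rewrite !sa_primeE !isw_inv -eU.
rewrite rmorphM /= rmorphM /=.
have := sign_sets dST; rewrite /poly_prime => e.
rewrite (_ : comp_mpoly _ ((-1) ^+ ninv S T) = (-1) ^+ ninv S T); last first.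
  exact: (pp_sign (ninv S T)).
rewrite [LHS]mulrA e.
ring.
Qed.
End Alg.

Section Alg2.
Variable K : fieldType.
Local Notation SA := (SA K).

Lemma eps0 : eps K set0 = 1.
Proof.
rewrite /eps /swinv card_pairs (eq_count (a2 := pred0)) ?count_pred0 //.
by move=> p; rewrite /= !inE.
Qed.

Lemma eps1 i : eps K [set i] = 1.
Proof.
rewrite /eps /swinv card_pairs (eq_count (a2 := pred0)) ?count_pred0 //.
move=> [a b] /=; rewrite !inE; case: eqP => // ->; case: eqP => // ->.
by rewrite ltnn !andbF.
Qed.

Lemma pp0 : poly_prime (0 : {mpoly K[4]}) = 0.
Proof. by rewrite /poly_prime raddf0. Qed.

Lemma addE (f g : SA) V : (f + g) V = f V + g V.
Proof. by rewrite /GRing.add /= ffunE. Qed.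

Lemma prime_add (f g : SA) : sa_prime (f + g) = sa_prime f + sa_prime g.
Proof.
apply/ffunP => U; rewrite addE !sa_primeE addE.
by rewrite /poly_prime rmorphD mulrDr.
Qed.

Lemma prime_x i : sa_prime (sa_x K i) = sa_x K (sw i).
Proof.
apply/ffunP => U; rewrite sa_primeE !ffunE imset_eq0.
case: (U =P set0) => [->|_]; last by rewrite pp0 mulr0.
rewrite imset0 eps0 mul1r /poly_prime comp_mpolyXU -tnth_nth tnth_mktuple.
by [].
Qed.

Lemma prime_y i : sa_prime (sa_y K i) = sa_y K (sw i).
Proof.
apply/ffunP => U; rewrite sa_primeE !ffunE.
have -> : (sw @: U == [set i]) = (U == [set sw i]).
  apply/eqP/eqP => [H|->]; last by rewrite imset_set1 sw_inv.
  by rewrite -(isw_inv U) H imset_set1.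
case: (U =P [set sw i]) => [->|_]; last by rewrite pp0 mulr0.
by rewrite imset_set1 sw_inv eps1 mul1r /poly_prime rmorph1.
Qed.

Lemma prime_scal (c : K) : sa_prime (sa_scal c) = sa_scal c.
Proof.
apply/ffunP => U; rewrite sa_primeE !ffunE imset_eq0.
case: (U =P set0) => [->|_]; last by rewrite pp0 mulr0.
by rewrite imset0 eps0 mul1r /poly_prime comp_mpolyC.
Qed.

Lemma prime0 : sa_prime (0 : SA) = 0.
Proof.
apply/ffunP => U; rewrite sa_primeE.
have z : forall V, (0 : SA) V = 0 by move=> V; rewrite /GRing.zero /= ffunE.
by rewrite !z pp0 mulr0.
Qed.

Lemma mx2E (a b c d : SA) :
  [/\ mx2_of a b c d 0 0 = a, mx2_of a b c d 0 1 = b,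
      mx2_of a b c d 1 0 = c & mx2_of a b c d 1 1 = d].
Proof. by split; rewrite mxE. Qed.

Lemma addmxE' (A B : mx2 K) i j : (A + B) i j = A i j + B i j.
Proof. by rewrite !mxE. Qed.

Lemma mulE (A B : mx2 K) i j :
  mx2_mul A B i j = sa_mul (A i 0) (B 0 j) + sa_mul (A i 1) (B 1 j).
Proof.
have e0 : ord0 = 0 :> 'I_2 by apply/val_inj.
have e1 : lift ord0 ord0 = 1 :> 'I_2 by apply/val_inj.
by rewrite mxE big_ord_recl big_ord1 e0 e1.
Qed.

End Alg2.

Definition inv (K : fieldType) (A : mx2 K) :=
  [/\ A 1 1 = sa_prime (A 0 0), A 1 0 = sa_prime (A 0 1),
      A 0 0 = sa_prime (A 1 1) & A 0 1 = sa_prime (A 1 0)].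

Lemma inv_F (K : fieldType) (A : mx2 K) : inF A -> inv A.
Proof.
elim => {A} [c| | |A B _ [ha1 ha2 ha3 ha4] _ [hb1 hb2 hb3 hb4]
              |A B _ [ha1 ha2 ha3 ha4] _ [hb1 hb2 hb3 hb4]].
- have [e1 e2 e3 e4] := mx2E (sa_scal c) 0 0 (sa_scal c).
  by split; rewrite ?e1 ?e2 ?e3 ?e4 ?prime_scal ?prime0.
- have [e1 e2 e3 e4] := mx2E (sa_x K 0) (sa_y K 0) (sa_y K 2) (sa_x K 2).
  have s0 : sw 0 = 2 by rewrite swE; apply/val_inj.
  have s2 : sw 2 = 0 by rewrite swE; apply/val_inj.
  by rewrite /C1; split; rewrite ?e1 ?e2 ?e3 ?e4 ?prime_x ?prime_y ?s0 ?s2.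
- have [e1 e2 e3 e4] := mx2E (sa_x K 1) (sa_y K 1) (sa_y K 3) (sa_x K 3).
  have s0 : sw 1 = 3 by rewrite swE; apply/val_inj.
  have s2 : sw 3 = 1 by rewrite swE; apply/val_inj.
  by rewrite /C2; split; rewrite ?e1 ?e2 ?e3 ?e4 ?prime_x ?prime_y ?s0 ?s2.
- by split; rewrite !addmxE' prime_add; congr (_ + _).
- split; rewrite !mulE prime_add !prime_mul.
  + by rewrite -ha1 -hb1 -ha2 -hb4 addrC.
  + by rewrite -ha1 -hb2 -ha2 -hb3 addrC.
  + by rewrite -ha4 -hb2 -ha3 -hb3 addrC.
  + by rewrite -ha4 -hb1 -ha3 -hb4 addrC.
Qed.

Unset Implicit Arguments.
Theorem lemma4 (K : fieldType)
  (K_infinite : forall s : seq K, exists x : K, x \notin s)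
  (K_char : (2%:R : K) != 0)
  (A : mx2 K) :
  inF A ->
  A 1 1 = sa_prime (A 0 0) /\ A 1 0 = sa_prime (A 0 1).
Proof. by move=> /inv_F [h1 h2 _ _]. Qed.
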